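(* In the finite-inventory setting described in the context, for every season $n$ and period $t\in\{1,\dots,T\}$, \[ |\Delta_t^n|\le 2\|\widehat V_n-V^*\|_\infty+(T-t+1)\,R_{\max}\,\delta_n . \]
   Context: States are $x=(s,t)$ with $s\in\{0,\dots,C\}$, $t\in\{1,\dots,T+1\}$; $\mathcal{X}$ is the set of all states with $t\le T+1$. From state $(s,t)$, a price $p\in[p_l,p_h]$ ($0<p_l<p_h$) yields sales $q\in\{0,\dots,s\}$ with true probability $P(q\mid s,p)$, reward $pq$, next state $(s-q,t+1)$. $R_{\max}=p_hC$. $V^*(s,T+1)=0$, $V^*(s,t)=\max_{p}\sum_{q=0}^sP(q\mid s,p)[pq+V^*(s-q,t+1)]$. For season $n$, $\widehat P_n(\cdot\mid s,p)$ is an estimated sales distribution on $\{0,\dots,s\}$ (obtained by discretizing a Gaussian with the GP posterior mean and variance at $p$), $\widehat V_n(s,T+1)=0$, $\widehat V_n(s,t)=\max_{p}\sum_{q=0}^s\widehat P_n(q\mid s,p)[pq+\widehat V_n(s-q,t+1)]$, and the policy $\psi$ in season $n$ selects at $(s,t)$ a price attaining this maximum. $\|\widehat V_n-V^*\|_\infty=\max_{x\in\mathcal{X}}|\widehat V_n(x)-V^*(x)|$, and $\delta_n=\sup_{(s,t)\in\mathcal{X},\,p\in[p_l,p_h]}\|\widehat P_n(\cdot\mid s,p)-P(\cdot\mid s,p)\|_1$. In season $n$, the random states $X_t^n=(S_t^n,t)$ evolve under $P$ with prices from $\psi$, starting at $X_1^n=(C,1)$, with rewards $r_t^n$; $\mathbb{E}_\psi$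 is the corresponding expectation, and $\Delta_t^n=\mathbb{E}_\psi\big[V^*(X_t^n)-\mathbb{E}_\psi[r_t^n+V^*(X_{t+1}^n)\mid X_t^n]\big]$. *)

(* Defs.v *)
From mathcomp Require Import all_boot all_order all_algebra.
From mathcomp Require Import boolp classical_sets reals.
Set Implicit Arguments. Unset Strict Implicit. Unset Printing Implicit Defensive.
Import Order.TTheory GRing.Theory Num.Theory.
Local Open Scope classical_set_scope.
Local Open Scope ring_scope.

(* A sales kernel K : q -> s -> p -> R, K q s p = probability of selling q
   units when s units are on hand and price p is posted. *)

(* One-step value of posting price p in inventory s, with continuation W
   (W s' = value of the next state (s', t+1)):
   sum_{q=0}^s K(q|s,p) [p q + W(s - q)]. *)
Definition Qval (R : realType) (K : nat -> nat -> R -> R) (W : nat -> R)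
  (s : nat) (p : R) : R :=
  \sum_(q < s.+1) K q s p * (p * q%:R + W (s - q)%N).

(* Value with k periods remaining: Bellman recursion, max (= sup) over
   prices in [pl, ph]. *)
Fixpoint Vrem (R : realType) (pl ph : R) (K : nat -> nat -> R -> R)
  (k : nat) (s : nat) : R :=
  match k with
  | 0 => 0
  | k'.+1 => sup [set x | exists2 p : R, pl <= p <= ph &
                          x = Qval K (Vrem pl ph K k') s p]
  end.

(* V(s,t) for t in {1,...,T+1}: V(s,T+1) = 0 and the Bellman recursion. *)
Definition Vfun (R : realType) (T : nat) (pl ph : R) (K : nat -> nat -> R -> R)
  (s t : nat) : R := Vrem pl ph K (T.+1 - t) s.

Definition is_sales_kernel (R : realType) (C : nat) (pl ph : R)
  (K : nat -> nat -> R -> R) : Prop :=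
  forall (s : nat) (p : R), (s <= C)%N -> pl <= p <= ph ->
    (forall q : nat, (q <= s)%N -> 0 <= K q s p) /\
    \sum_(q < s.+1) K q s p = 1.

Definition greedy_policy (R : realType) (C T : nat) (pl ph : R)
  (Khat : nat -> nat -> R -> R) (psi : nat -> nat -> R) : Prop :=
  forall s t : nat, (s <= C)%N -> (1 <= t <= T)%N ->
    pl <= psi s t <= ph /\
    Qval Khat (fun s' => Vfun T pl ph Khat s' t.+1) s (psi s t)
      = Vfun T pl ph Khat s t.

(* Law of S_{k+1} for the inventory chain run under the true kernel K with
   prices psi, started at S_1 = C: muk k s = Pr(S_{k+1} = s). *)
Fixpoint muk (R : realType) (C : nat) (K : nat -> nat -> R -> R)
  (psi : nat -> nat -> R) (k : nat) : nat -> R :=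
  match k with
  | 0 => fun s => (s == C)%:R
  | k'.+1 => fun s' =>
      \sum_(s < C.+1) muk C K psi k' s *
        (if (s' <= s)%N then K (s - s')%N s (psi s k'.+1) else 0)
  end.

Definition state_law (R : realType) (C : nat) (K : nat -> nat -> R -> R)
  (psi : nat -> nat -> R) (t : nat) : nat -> R := muk C K psi t.-1.

(* Delta_t = E_psi[ V*(X_t) - E_psi[r_t + V*(X_{t+1}) | X_t] ], where
   E[r_t + V*(X_{t+1}) | X_t = (s,t)] = Qval K V*(.,t+1) s (psi s t). *)
Definition Delta (R : realType) (C T : nat) (pl ph : R)
  (K : nat -> nat -> R -> R) (psi : nat -> nat -> R) (t : nat) : R :=
  \sum_(s < C.+1) state_law C K psi t s *
    (Vfun T pl ph K s t - Qval K (fun s' => Vfun T pl ph K s' t.+1) s (psi s t)).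

(* sup-norm over X = {0..C} x {1..T+1} *)
Definition supnorm (R : realType) (C T : nat) (V W : nat -> nat -> R) : R :=
  \big[Num.max/0]_(s < C.+1) \big[Num.max/0]_(t < T.+1)
     `|V s t.+1 - W s t.+1|.

Definition kernel_dist (R : realType) (C T : nat) (pl ph : R)
  (K Khat : nat -> nat -> R -> R) : R :=
  sup [set d | exists s t : nat, exists2 p : R,
         [/\ (s <= C)%N, (1 <= t <= T.+1)%N & pl <= p <= ph] &
         d = \sum_(q < s.+1) `|Khat q s p - K q s p|].

(* Main.v *)
Require Import Defs.
From mathcomp Require Import all_boot all_order all_algebra.
From mathcomp Require Import boolp classical_sets reals.
From mathcomp Require Import ring lra.
Import Order.TTheory GRing.Theory Num.Theory.
Local Open Scope classical_set_scope.
Local Open Scope ring_scope.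

Lemma Qval_bounds (R : realType) (K : nat -> nat -> R -> R) (W : nat -> R)
  (s : nat) (p L M : R) :
  (forall q, (q <= s)%N -> 0 <= K q s p) -> \sum_(q < s.+1) K q s p = 1 ->
  (forall q, (q <= s)%N -> L <= p * q%:R + W (s - q)%N <= M) ->
  L <= Qval K W s p <= M.
Proof.
move=> K0 K1 HB; rewrite /Qval; apply/andP; split.
- apply: (@le_trans _ _ (\sum_(q < s.+1) K q s p * L)).
    by rewrite -mulr_suml K1 mul1r.
  apply: ler_sum => q _; apply: ler_wpM2l; first exact: K0 (ltn_ord q).
  by case/andP: (HB q (ltn_ord q)).
- apply: (@le_trans _ _ (\sum_(q < s.+1) K q s p * M)); last first.
    by rewrite -mulr_suml K1 mul1r.
  apply: ler_sum => q _; apply: ler_wpM2l; first exact: K0 (ltn_ord q).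
  by case/andP: (HB q (ltn_ord q)).
Qed.

Lemma Vrem_bounds (R : realType) (C : nat) (pl ph : R) (K : nat -> nat -> R -> R) :
  0 <= pl -> pl <= ph -> is_sales_kernel C pl ph K ->
  forall k s, (s <= C)%N -> 0 <= Vrem pl ph K k s <= k%:R * (ph * C%:R).
Proof.
move=> pl0 plph HK; elim=> [|k IH] s sC /=; first by rewrite mul0r lexx.
set S := (X in sup X).
have Sb : forall x, S x -> 0 <= x <= k.+1%:R * (ph * C%:R).
  move=> x [p /andP[p1 p2] ->]; have [K0 K1] := HK s p sC (introT andP (conj p1 p2)) .
  apply: Qval_bounds => // q qs.
  have /andP[W0 W1] := IH (s - q)%N (leq_trans (leq_subr _ _) sC).
  have p0 : 0 <= p by apply: le_trans p1.
  apply/andP; split; first by apply: addr_ge0 => //; apply: mulr_ge0.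
  rewrite -addn1 natrD mulrDl mul1r addrC; apply: lerD => //.
  by apply: ler_pM => //; rewrite ler_nat (leq_trans qs).
have Sne : S !=set0.
  exists (Qval K (Vrem pl ph K k) s pl); exists pl => //; by rewrite lexx plph.
have Sub : has_ubound S.
  by exists (k.+1%:R * (ph * C%:R)) => x /Sb /andP[].
have [x Sx] := Sne.
apply/andP; split.
  have /andP[x0 _] := Sb x Sx; apply: le_trans x0 _.
  exact: sup_upper_bound.
by apply: ge_sup => // y /Sb /andP[].
Qed.

Lemma sum_rev_cond (R : realType) (C s : nat) (f : nat -> R) : (s < C.+1)%N ->
  \sum_(s' < C.+1) (if (s' <= s)%N then f (s - s')%N else 0) = \sum_(q < s.+1) f q.
Proof.
move=> sC; rewrite -big_mkcond /= -(big_ord_widen C.+1 (fun i => f (s - i)%N) sC).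
rewrite (reindex_inj rev_ord_inj) /=; apply: eq_bigr => i _.
by rewrite subSS subKn // -ltnS.
Qed.

Lemma muk_law (R : realType) (C T : nat) (pl ph : R) (K : nat -> nat -> R -> R)
  (psi : nat -> nat -> R) :
  is_sales_kernel C pl ph K ->
  (forall s j, (s <= C)%N -> (1 <= j <= T)%N -> pl <= psi s j <= ph) ->
  forall k, (k <= T)%N ->
  (forall s, 0 <= muk C K psi k s) /\ \sum_(s < C.+1) muk C K psi k s = 1.
Proof.
move=> HK Hpsi; elim=> [|k IH] kT /=.
  split; first by move=> s; rewrite ler0n.
  rewrite (bigD1 (Ordinal (ltnSn C))) //= eqxx big1 ?addr0 // => i ni.
  by rewrite (_ : (nat_of_ord i == C) = false) //; apply/negP => /eqP e; case/eqP: ni; apply: val_inj.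
have [IH0 IH1] := IH (ltnW kT).
have Hk : forall s : 'I_C.+1, (forall q, (q <= s)%N -> 0 <= K q s (psi s k.+1)) /\
    \sum_(q < s.+1) K q s (psi s k.+1) = 1.
  move=> s; apply: HK; first by rewrite -ltnS.
  by apply: Hpsi; rewrite // -ltnS.
split.
  move=> s'; apply: sumr_ge0 => s _; apply: mulr_ge0 => //.
  case: ifP => // _; by apply: (Hk s).1; rewrite leq_subr.
rewrite exchange_big /= -IH1; apply: eq_bigr => s _.
rewrite -mulr_sumr (@sum_rev_cond _ C s (fun q => K q s (psi s k.+1))) // ?(Hk s).2 ?mulr1 //.
Qed.

Lemma supnorm_ge0 (R : realType) (C T : nat) (V W : nat -> nat -> R) :
  0 <= supnorm C T V W.
Proof.
rewrite /supnorm; elim/big_ind: _ => //; first by move=> x y x0 y0; rewrite le_max x0.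
move=> s _; elim/big_ind: _ => //; by move=> x y x0 y0; rewrite le_max x0.
Qed.

Lemma supnorm_ub (R : realType) (C T : nat) (V W : nat -> nat -> R) s t :
  (s <= C)%N -> (t <= T)%N -> `|V s t.+1 - W s t.+1| <= supnorm C T V W.
Proof.
move=> sC tT; rewrite /supnorm.
pose i : 'I_C.+1 := Ordinal (n:=C.+1) (m:=s) sC.
pose j : 'I_T.+1 := Ordinal (n:=T.+1) (m:=t) tT.
apply: le_trans (le_bigmax _ _ i).
apply: le_trans (le_bigmax _ _ j) => /=.
by [].
Qed.

Lemma kdist_ub (R : realType) (C T : nat) (pl ph : R) (K Kh : nat -> nat -> R -> R) s t p :
  is_sales_kernel C pl ph K -> is_sales_kernel C pl ph Kh ->
  (s <= C)%N -> (1 <= t <= T.+1)%N -> pl <= p <= ph ->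
  \sum_(q < s.+1) `|Kh q s p - K q s p| <= kernel_dist C T pl ph K Kh.
Proof.
move=> HK HKh sC tT pp; rewrite /kernel_dist.
apply: sup_upper_bound; last by exists s, t, p.
split; first by exists (\sum_(q < s.+1) `|Kh q s p - K q s p|); exists s, t, p.
exists 2 => _ [s' [t' [p' [s'C _ pp'] ->]]].
have [K0 K1] := HK s' p' s'C pp'; have [Kh0 Kh1] := HKh s' p' s'C pp'.
apply: (@le_trans _ _ (\sum_(q < s'.+1) (Kh q s' p' + K q s' p'))).
  apply: ler_sum => q _; apply: le_trans (ler_normB _ _) _.
  by rewrite !ger0_norm ?Kh0 ?K0 // -ltnS.
by rewrite big_split /= Kh1 K1.
Qed.

Theorem lemma3 (R : realType) (C T : nat) (pl ph : R)
  (P : nat -> nat -> R -> R) (Phat : nat -> nat -> nat -> R -> R)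
  (psi : nat -> nat -> nat -> R) (n t : nat) :
  0 < pl -> pl < ph ->
  is_sales_kernel C pl ph P ->
  is_sales_kernel C pl ph (Phat n) ->
  greedy_policy C T pl ph (Phat n) (psi n) ->
  (1 <= t <= T)%N ->
  `| Delta C T pl ph P (psi n) t |
    <= 2 * supnorm C T (Vfun T pl ph (Phat n)) (Vfun T pl ph P)
       + (T.+1 - t)%:R * (ph * C%:R) * kernel_dist C T pl ph P (Phat n).
Proof.
move=> pl0 plph HP HPh Hg tt; have /andP[t1 tT] := tt.
have pl0' : 0 <= pl by apply: ltW.
have plph' : pl <= ph by apply: ltW.
have ph0 : 0 <= ph by apply: le_trans plph'.
set N := supnorm _ _ _ _.
set D := kernel_dist _ _ _ _ _ _.
set M := (T.+1 - t)%:R * (ph * C%:R).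
have N0 : 0 <= N by apply: supnorm_ge0.
have D0 : 0 <= D.
  apply: le_trans (@kdist_ub _ C T pl ph P (Phat n) 0 1 pl HP HPh _ _ _).
  - by apply: sumr_ge0 => q _.
  - by [].
  - by rewrite ltnS.
  - by rewrite lexx plph'.
have M0 : 0 <= M by rewrite mulr_ge0 // mulr_ge0.
have Hx : forall s, (s <= C)%N ->
    `|Vfun T pl ph P s t - Qval P (fun s' => Vfun T pl ph P s' t.+1) s (psi n s t)|
      <= 2 * N + M * D.
  move=> s sC; have [pr Hq] := Hg s t sC tt.
  set p := psi n s t in pr Hq *.
  set Wh := (fun s' => Vfun T pl ph (Phat n) s' t.+1) in Hq *.
  set Ws := (fun s' => Vfun T pl ph P s' t.+1).
  have -> : Vfun T pl ph P s t - Qval P Ws s p =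
      (Vfun T pl ph P s t - Vfun T pl ph (Phat n) s t)
      + (Qval (Phat n) Wh s p - Qval P Wh s p) + (Qval P Wh s p - Qval P Ws s p).
    by rewrite -Hq; ring.
  have [P0 P1] := HP s p sC pr.
  have E1 : `|Vfun T pl ph P s t - Vfun T pl ph (Phat n) s t| <= N.
    rewrite distrC; have := @supnorm_ub _ C T (Vfun T pl ph (Phat n)) (Vfun T pl ph P) s t.-1 sC.
    rewrite prednK //; apply; rewrite (leq_trans (leq_pred _)) //.
  have E3 : `|Qval (Phat n) Wh s p - Qval P Wh s p| <= M * D.
    rewrite /Qval -sumrB.
    apply: le_trans (ler_norm_sum _ _ _) _.
    apply: (@le_trans _ _ (\sum_(q < s.+1) `|Phat n q s p - P q s p| * M)).
      apply: ler_sum => q _; rewrite -mulrBl normrM; apply: ler_wpM2l => //.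
      have qs : (q <= s)%N by rewrite -ltnS.
      have p0 : 0 <= p by apply: le_trans pl0' _; case/andP: pr.
      have /andP[W0 W1] := @Vrem_bounds _ C pl ph (Phat n) pl0' plph' HPh (T.+1 - t.+1)%N
         (s - q)%N (leq_trans (leq_subr _ _) sC).
      rewrite ger0_norm; last by apply: addr_ge0 => //; apply: mulr_ge0.
      rewrite subSS in W1; rewrite /M (subSn tT) -nat1r mulrDl mul1r.
      apply: lerD => //; apply: (ler_pM p0 (ler0n _ _)); first by case/andP: pr.
      by rewrite ler_nat (leq_trans qs).
    rewrite -mulr_suml mulrC; apply: ler_wpM2l => //.
    by apply: (@kdist_ub _ C T pl ph P (Phat n) s 1 p).
  have E4 : `|Qval P Wh s p - Qval P Ws s p| <= N.
    rewrite /Qval -sumrB.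
    apply: le_trans (ler_norm_sum _ _ _) _.
    apply: (@le_trans _ _ (\sum_(q < s.+1) P q s p * N)); last by rewrite -mulr_suml P1 mul1r.
    apply: ler_sum => q _.
    have qs : (q <= s)%N by rewrite -ltnS.
    have -> : P q s p * (p * q%:R + Wh (s - q)%N) - P q s p * (p * q%:R + Ws (s - q)%N)
      = P q s p * (Wh (s - q)%N - Ws (s - q)%N) by ring.
    rewrite normrM ger0_norm ?P0 //; apply: ler_wpM2l; first exact: P0.
    by apply: supnorm_ub => //; apply: leq_trans (leq_subr _ _) sC.
  apply: le_trans (ler_normD _ _) _.
  have -> : 2 * N + M * D = (N + M * D) + N by ring.
  apply: lerD => //; apply: le_trans (ler_normD _ _) _; exact: lerD.
have Hpsi : forall s j, (s <= C)%N -> (1 <= j <= T)%N -> pl <= psi n s j <= ph.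
  by move=> s j sC jT; case: (Hg s j sC jT).
have [mu0 mu1] := @muk_law _ C T pl ph P (psi n) HP Hpsi (t.-1) (leq_trans (leq_pred _) tT).
rewrite /Delta /state_law.
apply: le_trans (ler_norm_sum _ _ _) _.
apply: (@le_trans _ _ (\sum_(s < C.+1) muk C P (psi n) t.-1 s * (2 * N + M * D))).
  apply: ler_sum => s _; rewrite normrM ger0_norm //; apply: ler_wpM2l => //.
  by apply: Hx; rewrite -ltnS.
by rewrite -mulr_suml mu1 mul1r.
Qed.
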